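(* Let $G=(V,E)$ be a graph, let $\mathcal{M}$ be a nontrivial, unbounded graph matroid family with dimensionality $d$, and let $k\ge2$ be an integer. If $\mathcal{M}(G)$ is vertically $k$-connected, then the minimum degree of $G$ is at least $k+d-1$. In particular, $|V|\ge k+d$.
   Context: All graphs are finite and simple and have no isolated vertices. A graph matroid family $\mathcal{M}$ assigns to every graph $G$ a matroid $\mathcal{M}(G)$ on $E(G)$ such that (i) every graph isomorphism $V(G)\to V(H)$ induces an isomorphism $\mathcal{M}(G)\to\mathcal{M}(H)$, and (ii) for every subgraph $H$ of $G$, $\mathcal{M}(H)$ is the restriction of $\mathcal{M}(G)$ to $E(H)$. $r(G)$ is the rank of $\mathcal{M}(G)$. $\mathcal{M}$ is nontrivial if some graph $G$ has $r(G)<|E(G)|$, unbounded if $r(K_n)$ is unbounded. An $\mathcal{M}$-circuit is a graph $C$ with $r(C)<|E(C)|$ and $r(C-e)=|E(C)|-1$ for all edges $e$; the dimensionality $d$ is the minimum over $\mathcal{M}$-circuits of (minimum degree $-1$). For a matroid with rank function $r$ on ground set $E$ and positive integer $k$, a bipartition $(E_1,E_2)$ of $E$ is a vertical $k$-separation if $r(E_1),r(E_2)\ge k$ and $r(E_1)+r(E_2)\le r(E)+k-1$; the matroid is vertically $k$-connected if its rank is at least $k$ and it has no vertical $k'$-separation for any positive integer $k'<k$. *)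

(* Defs.v *)
From mathcomp Require Import all_boot all_order.
From mathcomp Require Import finmap.
Set Implicit Arguments. Unset Strict Implicit. Unset Printing Implicit Defensive.
Local Open Scope fset_scope.

(* A graph (finite, simple, no isolated vertices) is given by its edge set:
   a finite set of 2-element subsets of nat. Its vertex set is the union
   of its edges. *)
Definition edge := {fset nat}.
Definition graph := {fset edge}.

Definition is_graph (G : graph) : Prop := forall e, e \in G -> #|` e| = 2.

Definition verts (G : graph) : {fset nat} := \bigcup_(e <- G) e.

Definition deg (G : graph) (v : nat) : nat := #|` [fset e in G | v \in e]|.

Definition gimg (f : nat -> nat) (X : graph) : graph :=
  (fun e : edge => f @` e) @` X.

Definition Kn (n : nat) : graph :=
  (fun p : nat * nat => [fset p.1; p.2]) @` [fset p | p in [seq p <- allpairs pair (iota 0 n) (iota 0 n) | p.1 < p.2]].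

Definition matroid_rank (E : graph) (r : graph -> nat) : Prop :=
  [/\ (forall X, X `<=` E -> r X <= #|` X|),
      (forall X Y, X `<=` Y -> Y `<=` E -> r X <= r Y) &
      (forall X Y, X `<=` E -> Y `<=` E -> r (X `|` Y) + r (X `&` Y) <= r X + r Y)].

(* A graph matroid family: M G is the rank function of the matroid M(G) on E(G). *)
Definition graph_matroid_family (M : graph -> graph -> nat) : Prop :=
  [/\ (forall G, is_graph G -> matroid_rank G (M G)),
      (* (i) isomorphism invariance: a bijection V(G) -> V(H) preserving edges,
         H being the image graph *)
      (forall G (f : nat -> nat), is_graph G -> {in verts G &, injective f} ->
         forall X, X `<=` G -> M (gimg f G) (gimg f X) = M G X) &
      (forall G H, is_graph G -> H `<=` G ->
         forall X, X `<=` H -> M H X = M G X)].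

Definition grank (M : graph -> graph -> nat) (G : graph) : nat := M G G.

Definition nontrivial (M : graph -> graph -> nat) : Prop :=
  exists G, is_graph G /\ grank M G < #|` G|.

Definition unbounded (M : graph -> graph -> nat) : Prop :=
  forall b, exists n, b < grank M (Kn n).

Definition is_circuit (M : graph -> graph -> nat) (C : graph) : Prop :=
  [/\ is_graph C, grank M C < #|` C| &
      forall e, e \in C -> grank M (C `\ e) = (#|` C|).-1].

Definition mindeg_ge (G : graph) (m : nat) : Prop :=
  forall v, v \in verts G -> m <= deg G v.

Definition mindeg_eq (G : graph) (m : nat) : Prop :=
  mindeg_ge G m /\ exists2 v, v \in verts G & deg G v = m.

Definition dimensionality (M : graph -> graph -> nat) (d : nat) : Prop :=
  (exists C, is_circuit M C /\ mindeg_eq C d.+1) /\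
  (forall C m, is_circuit M C -> mindeg_eq C m -> d.+1 <= m).

Definition vert_sep (E : graph) (r : graph -> nat) (k : nat) (E1 E2 : graph) : Prop :=
  [/\ E1 `|` E2 = E, E1 `&` E2 = fset0, k <= r E1, k <= r E2 &
      r E1 + r E2 <= r E + k - 1].

Definition vert_connected (E : graph) (r : graph -> nat) (k : nat) : Prop :=
  k <= r E /\ forall k' E1 E2, 0 < k' < k -> ~ vert_sep E r k' E1 E2.

(* Main.v *)
Require Import Defs.
From mathcomp Require Import all_boot all_order.
From mathcomp Require Import finmap.
From mathcomp Require Import zify.
From Stdlib Require Import Classical.
Set Implicit Arguments. Unset Strict Implicit. Unset Printing Implicit Defensive.
Local Open Scope fset_scope.

Lemma r_card E r X : matroid_rank E r -> X `<=` E -> r X <= #|` X|.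
Proof. by case=> h _ _; apply: h. Qed.
Lemma r_mono E r X Y : matroid_rank E r -> X `<=` Y -> Y `<=` E -> r X <= r Y.
Proof. by case=> _ h _; apply: h. Qed.
Lemma r_sub E r X Y : matroid_rank E r -> X `<=` E -> Y `<=` E ->
  r (X `|` Y) + r (X `&` Y) <= r X + r Y.
Proof. by case=> _ _ h; apply: h. Qed.

Lemma r0 E r : matroid_rank E r -> r fset0 = 0.
Proof. move=> h; have := r_card h (fsub0set E); rewrite cardfs0; lia. Qed.

Lemma r_add1 E r X g : matroid_rank E r -> X `<=` E -> g \in E ->
  r (g |` X) <= r X + 1.
Proof.
move=> h XE gE.
have g1 : [fset g] `<=` E by rewrite fsub1set.
have := r_sub h g1 XE; have := r_card h g1; rewrite cardfs1. lia.
Qed.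

Lemma incl_mono E r A B g : matroid_rank E r -> A `<=` B -> B `<=` E -> g \in E ->
  r (g |` A) = r A -> r (g |` B) = r B.
Proof.
move=> h AB BE gE hA.
have AE : A `<=` E by apply: fsubset_trans BE.
have gAE : g |` A `<=` E by rewrite fsubUset fsub1set gE.
have := r_sub h BE gAE.
have -> : B `|` (g |` A) = g |` B.
  apply/fsetP=> z; rewrite !inE; move/fsubsetP: AB => AB.
  by case: (z \in A) / boolP => [/AB->|]; rewrite ?orbT //= ?orbF; case: (z == g); case: (z \in B).
have : r A <= r (B `&` (g |` A)).
  apply: r_mono h _ _; last by rewrite fsubIset // BE.
  by rewrite fsubsetI AB fsubsetU1.
have : r B <= r (g |` B).
  by apply: r_mono h _ _; rewrite ?fsubsetU1 // fsubUset fsub1set gE.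
lia.
Qed.

Lemma incl_union E r A Y : matroid_rank E r -> A `<=` E -> Y `<=` E ->
  (forall g, g \in Y -> r (g |` A) = r A) -> r (A `|` Y) = r A.
Proof.
move=> h AE; elim/fset1U_rect: Y => [|g Y gY IH] YE hY; first by rewrite fsetU0.
have YE' : Y `<=` E by apply: fsubset_trans YE; rewrite fsubsetU1.
have gE : g \in E by move/fsubsetP: YE; apply; rewrite fset1U1.
rewrite -IH //; last by move=> z zY; apply: hY; rewrite fset1Ur.
rewrite fsetUCA; apply: (incl_mono (A:=A) h) => //.
  by rewrite fsubsetUl.
  by rewrite fsubUset AE.
by apply: hY; rewrite fset1U1.
Qed.

Lemma indep_of_coloops E r S : matroid_rank E r -> S `<=` E ->
  (forall f, f \in S -> r (S `\ f) < r S) -> #|` S| <= r S.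
Proof.
move=> h SE hS.
suff: forall T, T `<=` S -> r (S `\` T) + #|` T| <= r S.
  by move/(_ S (fsubset_refl _)); rewrite fsetDv; lia.
elim/fset1U_rect => [|g T gT IH]; first by rewrite fsetD0 cardfs0 addn0.
rewrite fsubUset fsub1set => /andP[gS TS].
have := IH TS.
have X1E : S `\` T `<=` E by apply: fsubset_trans SE; apply: fsubsetDl.
have X2E : S `\ g `<=` E by apply: fsubset_trans SE; apply: fsubsetDl.
have := r_sub h X1E X2E.
have -> : (S `\` T) `|` (S `\ g) = S.
  apply/fsetP=> z; rewrite !inE; case: (z =P g) => [->|]; rewrite ?gT ?gS //=.
  by case: (z \in T); case: (z \in S).
have -> : (S `\` T) `&` (S `\ g) = S `\` (g |` T).
  apply/fsetP=> z; rewrite !inE.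
  by case: (z \in T); case: (z == g); case: (z \in S).
have := hS g gS.
have -> : #|` g |` T| = #|` T|.+1 by rewrite cardfsU1 gT.
lia.
Qed.

Lemma min_card (Q : graph -> Prop) S0 : Q S0 ->
  exists S, Q S /\ forall S', Q S' -> #|` S| <= #|` S'|.
Proof.
move: {2}#|` S0| (leqnn #|` S0|) => n; elim: n S0 => [|n IH] S0 hS0 QS0.
  by exists S0; split => // S' _; move: hS0; rewrite leqn0 => /eqP ->.
case: (classic (exists S', Q S' /\ #|` S'| < #|` S0|)) => [[S' [QS' lt]]|nex].
  by apply: (IH S') => //; lia.
exists S0; split => // S' QS'; rewrite leqNgt; apply/negP => lt; apply: nex; by exists S'.
Qed.

Lemma circ_exists E r X e : matroid_rank E r -> X `<=` E -> e \in X ->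
  r X <= r (X `\ e) ->
  exists C, [/\ C `<=` X, e \in C, r C < #|` C| &
                forall f, f \in C -> r (C `\ f) = (#|` C|).-1].
Proof.
move=> h XE eX hX.
have XdE : X `\ e `<=` E by apply: fsubset_trans XE; apply: fsubD1set.
pose Q S := S `<=` X `\ e /\ r (e |` S) = r S.
have Pex : Q (X `\ e).
  split => //; rewrite fsetD1K //.
  apply/eqP; rewrite eqn_leq hX /=; apply: r_mono h _ XE; exact: fsubD1set.
case: (min_card Pex) => S [[SX hS] min].
have SE : S `<=` E by apply: fsubset_trans XdE.
have eS : e \notin S by move/fsubsetD1P: SX => [].
have eE : e \in E by move/fsubsetP: XE; apply.
have eSE : e |` S `<=` E by rewrite fsubUset fsub1set eE.
have minS : forall S', S' `<=` S -> r (e |` S') = r S' -> #|` S| <= #|` S'|.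
  move=> S' S'S hS'; apply: min; split => //.
  exact: fsubset_trans SX.
have indS : #|` S| <= r S.
  apply: (indep_of_coloops h) => // f fS; rewrite ltnNge; apply/negP => hf.
  have Sf : S `\ f `<=` S by apply: fsubD1set.
  have SfE : S `\ f `<=` E by apply: fsubset_trans SE.
  have h1 : r (e |` (S `\ f)) <= r (e |` S).
    apply: r_mono h _ eSE; exact: fsetUS.
  have h2 : r (S `\ f) <= r (e |` (S `\ f)).
    apply: r_mono h _ _; first exact: fsubsetU1.
    by apply: fsubset_trans eSE; apply: fsetUS.
  have := cardfsD1 f S; rewrite fS.
  have : r (e |` (S `\ f)) = r (S `\ f) by lia.
  move=> /(minS _ Sf); lia.
exists (e |` S); split.
- by rewrite fsubUset fsub1set eX; apply: (fsubset_trans SX); apply: fsubD1set.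
- exact: fset1U1.
- rewrite cardfsU1 eS hS; have := r_card h SE; lia.
- move=> f; rewrite cardfsU1 eS /=.
  case/fset1UP => [->|fS]. rewrite fsetU1K //. have := r_card h SE. move: indS. by move=> a b; apply/eqP; rewrite add0n eqn_leq a b.
  have fe : f != e by apply/eqP => fe; rewrite -fe fS in eS.
  have -> : (e |` S) `\ f = e |` (S `\ f).
    apply/fsetP => z; rewrite !inE; case: (z =P e) => [->|] //=; by rewrite eq_sym fe.
  have Sf : S `\ f `<=` S by apply: fsubD1set.
  have SfE : S `\ f `<=` E by apply: fsubset_trans SE.
  have eSfE : e |` (S `\ f) `<=` E by apply: fsubset_trans eSE; apply: fsetUS.
  have h2 : r (S `\ f) <= r (e |` (S `\ f)) by apply: r_mono h _ eSfE; exact: fsubsetU1.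
  have h3 : r S <= r (S `\ f) + 1.
    have := r_add1 h SfE (fsubsetP SE f fS); rewrite fsetD1K //.
  have h4 : r (e |` (S `\ f)) <= #|` e |` (S `\ f)| by apply: r_card h eSfE.
  have eSf : e \notin S `\ f by rewrite inE negb_and eS orbT.
  rewrite cardfsU1 eSf add1n in h4.
  have c1 := cardfsD1 f S; rewrite fS in c1.
  have h5 : r (e |` (S `\ f)) != r (S `\ f).
    by apply/eqP => /(minS _ Sf); rewrite c1 add1n ltnn.
  rewrite add1n in c1; rewrite add0n c1.
  move: h2 h3 h4 h5 indS; rewrite c1.
  move: (r (e |` (S `\ f))) (r (S `\ f)) (r S) (#|` S `\ f|) => a b c n.
  clear; move=> h2 h3 h4 /eqP h5 h6; lia.
Qed.

Definition star (X : graph) (v : nat) : graph := [fset e in X | v \in e].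

Lemma in_star X v e : (e \in star X v) = (e \in X) && (v \in e).
Proof. by rewrite /star !inE. Qed.

Lemma star_sub X v : star X v `<=` X.
Proof. by apply/fsubsetP => e; rewrite in_star => /andP[]. Qed.

Lemma is_graph_sub G H : is_graph G -> H `<=` G -> is_graph H.
Proof. by move=> hG /fsubsetP HG e /HG; apply: hG. Qed.

Lemma gM_mat M G : graph_matroid_family M -> is_graph G -> matroid_rank G (M G).
Proof. by case=> h _ _; apply: h. Qed.

Lemma gM_res M G H X : graph_matroid_family M -> is_graph G -> H `<=` G ->
  X `<=` H -> M H X = M G X.
Proof. by case=> _ _ h hG HG XH; apply: h hG HG X XH. Qed.

Lemma grank_res M G X : graph_matroid_family M -> is_graph G -> X `<=` G ->
  grank M X = M G X.
Proof. by move=> hM hG XG; rewrite /grank (gM_res hM hG XG). Qed.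

Lemma in_verts (G : graph) (v : nat) : reflect (exists2 e, e \in G & v \in e) (v \in verts G).
Proof.
apply: (iffP (bigfcupP _ _ _ _)) => [[e /andP[eG _] ve]|[e eG ve]]; first by exists e.
by exists e; rewrite ?eG.
Qed.

Lemma min_exists (S : {fset nat}) (g : nat -> nat) : S != fset0 ->
  exists2 v, v \in S & forall w, w \in S -> g v <= g w.
Proof.
elim/fset1U_rect: S => [|x X xX IH]; first by rewrite eqxx.
move=> _.
case: (fset_0Vmem X) => [->|[y yX]].
  by exists x; rewrite ?fset1U1 // => w; rewrite fsetU0 => /fset1P ->.
case: IH; first by apply/fset0Pn; exists y.
move=> v vX hv.
case: (leqP (g x) (g v)) => hxv.
  exists x; first exact: fset1U1.
  by move=> w /fset1UP [->|/hv]; [|apply: leq_trans].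
exists v; first by rewrite fset1Ur.
by move=> w /fset1UP [->|/hv]; [apply: ltnW|].
Qed.

Lemma deg_sub H G v : H `<=` G -> deg H v <= deg G v.
Proof.
move=> /fsubsetP HG; apply: fsubset_leq_card; apply/fsubsetP => e; rewrite !inE.
by case/andP=> [/HG -> ->].
Qed.

Lemma circ_deg M d C v : dimensionality M d -> is_circuit M C -> v \in verts C ->
  d.+1 <= deg C v.
Proof.
move=> [_ hd] hC vC.
have : verts C != fset0 by apply/eqP => h0; rewrite h0 in vC.
case/(min_exists (deg C)) => w wC hw.
apply: leq_trans (hw v vC); apply: hd hC _; split; last by exists w.
by move=> z /hw.
Qed.

Lemma circuit_in M G X e : graph_matroid_family M -> is_graph G -> X `<=` G ->
  e \in X -> M G X <= M G (X `\ e) ->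
  exists C, [/\ C `<=` X, e \in C & is_circuit M C].
Proof.
move=> hM hG XG eX hX.
case: (circ_exists (gM_mat hM hG) XG eX hX) => C [CX eC hC hCf].
have CG : C `<=` G by apply: fsubset_trans CX XG.
exists C; split => //; split.
- exact: is_graph_sub CG.
- by rewrite (grank_res hM hG CG).
- move=> f fC; rewrite (grank_res hM hG) ?hCf //.
  by apply: fsubset_trans CG; apply: fsubD1set.
Qed.

Lemma deg_star X v : deg X v = #|` star X v|.
Proof. by []. Qed.

Lemma star_rank M d G v : graph_matroid_family M -> dimensionality M d ->
  is_graph G -> forall n X, X `<=` G -> deg X v = n ->
  M G (X `\` star X v) + minn n d <= M G X.
Proof.
move=> hM hd hG n; elim: n => [|n IH] X XG hn.
  rewrite minnC minn0 addn0; apply: r_mono (gM_mat hM hG) _ XG; exact: fsubsetDl.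
have : star X v != fset0 by apply/eqP => h0; rewrite deg_star h0 cardfs0 in hn.
case/fset0Pn => g; rewrite in_star => /andP[gX vg].
have X'G : X `\ g `<=` G by apply: fsubset_trans XG; apply: fsubD1set.
have hn' : deg (X `\ g) v = n.
  move: hn; rewrite !deg_star (cardfsD1 g (star X v)) in_star gX vg /=.
  have -> : star (X `\ g) v = star X v `\ g.
    by apply/fsetP => z; rewrite in_fsetD1 !in_star in_fsetD1; case: (z == g).
  by rewrite add1n => -[].
have hIH := IH _ X'G hn'.
have E1 : (X `\ g) `\` star (X `\ g) v = X `\` star X v.
  apply/fsetP => z; rewrite !in_fsetD !in_star !in_fsetD1.
  case: (z =P g) => [->|/eqP zg]; rewrite !inE ?eqxx ?zg ?gX ?vg //=; by case: (z \in X); case: (v \in z).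
have mono : M G (X `\ g) <= M G X by apply: r_mono (gM_mat hM hG) _ XG; apply: fsubD1set.
rewrite E1 in hIH.
case: (ltnP n d) => nd.
  have lt : M G (X `\ g) < M G X.
    rewrite ltnNge; apply/negP => le.
    case: (circuit_in hM hG XG gX le) => C [CX gC hC].
    have vC : v \in verts C by apply/in_verts; exists g.
    have := circ_deg hd hC vC.
    have := deg_sub v CX; rewrite hn; lia.
  move: hIH; rewrite !minnE; lia.
move: hIH; rewrite !minnE; lia.
Qed.

Lemma edge2_eq (f : edge) u v : #|` f| = 2 -> u \in f -> v \in f -> u != v ->
  f = [fset u; v].
Proof.
move=> hf uf vf uv; apply/eqP; rewrite eq_sym eqEfcard fsubUset !fsub1set uf vf.
by rewrite cardfs2 uv hf.
Qed.

Lemma edge2_other (e : edge) u : #|` e| = 2 -> u \in e ->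
  exists2 w, w != u & e = [fset u; w].
Proof.
move=> he ue; have := cardfsD1 u e; rewrite ue he add1n => -[] /esym /eqP.
case/cardfs1P => w hw.
have we : w \in e `\ u by rewrite hw fset11.
move: (we); rewrite in_fsetD1 => /andP[wu we'].
by exists w => //; apply: edge2_eq => //; rewrite eq_sym.
Qed.

Lemma deg_lt_verts G v : is_graph G -> v \in verts G -> deg G v < #|` verts G|.
Proof.
move=> hG vG.
pose phi := fun e : edge => e `\ v.
have inj : {in star G v &, injective phi}.
  move=> e1 e2; rewrite !in_star => /andP[_ v1] /andP[_ v2] h.
  by move: h; rewrite /phi => h; rewrite -(fsetD1K v1) h fsetD1K.
have c1 : #|` phi @` star G v| = deg G v by apply/eqP/card_in_imfsetP.
have sub : phi @` star G v `<=` (fun u => [fset u]) @` (verts G `\ v).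
  apply/fsubsetP => x /imfsetP [e /= eS ->]; move: eS; rewrite in_star => /andP[eG ve].
  case: (edge2_other (hG e eG) ve) => w wv ee; rewrite ee in eG *.
  have -> : phi [fset v; w] = [fset w].
    apply/fsetP => z; rewrite /phi !inE.
    case: (z =P v) => [->|_]; [by rewrite eq_sym (negbTE wv) | by rewrite /=].
  apply/imfsetP; exists w => //=; rewrite in_fsetD1 wv /=.
  by apply/in_verts; exists [fset v; w] => //; rewrite !inE eqxx orbT.
have := fsubset_leq_card sub.
have : #|` (fun u => [fset u]) @` (verts G `\ v)| = #|` verts G `\ v|.
  by apply/eqP/card_in_imfsetP => x y _ _; apply: fset1_inj.
have := cardfsD1 v (verts G); rewrite vG c1; lia.
Qed.

Lemma fset2C (a b : nat) : [fset a; b] = [fset b; a].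
Proof. by apply/fsetP => z; rewrite !inE orbC. Qed.

Lemma in_Kn n (g : edge) : reflect (exists a b, [/\ a < b, b < n & g = [fset a; b]]) (g \in Kn n).
Proof.
apply: (iffP idP).
  case/imfsetP => p hp ->; move: hp; rewrite inE mem_filter => /andP[lt].
  case/allpairsP => [[a b] [ha hb /= pe]]; rewrite pe /= in lt *.
  by exists a, b; move: ha hb; rewrite !mem_iota /= => ha hb; split.
case=> a [b [ab bn ->]].
apply/imfsetP; exists (a, b) => //=; rewrite inE mem_filter /= ab /=.
by apply/allpairsP; exists (a, b); rewrite !mem_iota /= (ltn_trans ab bn) bn.
Qed.

Lemma Kn_edge n a b : a != b -> a < n -> b < n -> [fset a; b] \in Kn n.
Proof.
move=> ab an bn; case: (ltngtP a b) => [lt|lt|e]; last by rewrite e eqxx in ab.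
  by apply/in_Kn; exists a, b.
by rewrite fset2C; apply/in_Kn; exists b, a.
Qed.

Lemma Kn_graph n : is_graph (Kn n).
Proof.
by move=> g /in_Kn [a [b [ab _ ->]]]; rewrite cardfs2; case: (a =P b) => // e; rewrite e ltnn in ab.
Qed.

Lemma Kn_mono m n : m <= n -> Kn m `<=` Kn n.
Proof.
move=> mn; apply/fsubsetP => g /in_Kn [a [b [ab bm ->]]].
by apply/in_Kn; exists a, b; split => //; apply: leq_trans mn.
Qed.

Lemma emb (V : {fset nat}) u w x y : u \in V -> w \in V -> u != w -> x != y ->
  #|` V| <= y ->
  exists f : nat -> nat, [/\ {in V &, injective f}, f u = y, f w = x &
    forall z, z \in V -> z != u -> z != w -> f z < #|` V| /\ f z != x].
Proof.
move=> uV wV uw xy sy.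
pose L := enum_fset (V `\` [fset u; w]).
pose Lt := [seq t <- iota 0 #|` V| | t != x].
pose f z := if z == u then y else if z == w then x else nth 0 Lt (index z L).
have sL : size L = #|` V| - 2.
  rewrite /L -/(#|` V `\` [fset u; w]|) cardfsDS ?cardfs2 ?uw //.
  by rewrite fsubUset !fsub1set uV wV.
have sLt : #|` V| - 1 <= size Lt.
  rewrite /Lt size_filter.
  have := count_predC (pred1 x) (iota 0 #|` V|).
  have := count_uniq_mem x (iota_uniq 0 #|` V|).
  rewrite size_iota; case: (x \in iota 0 #|` V|) => /= -> ; rewrite /predC /=.
  - have -> : count (fun t => t != x) (iota 0 #|` V|) = count (predC (pred1 x)) (iota 0 #|` V|) by [].
    lia.
  - have -> : count (fun t => t != x) (iota 0 #|` V|) = count (predC (pred1 x)) (iota 0 #|` V|) by [].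
    lia.
have uLt : uniq Lt by rewrite filter_uniq // iota_uniq.
have hO : forall z, z \in V -> z != u -> z != w ->
    [/\ z \in L, index z L < size Lt, f z \in Lt & f z = nth 0 Lt (index z L)].
  move=> z zV zu zw.
  have zL : z \in L by rewrite /L -/(z \in V `\` [fset u; w]) in_fsetD zV in_fset2 negb_or zu zw.
  have il : index z L < size Lt.
    have := index_mem z L; rewrite zL sL => lt.
    by apply: leq_trans lt _; apply: leq_trans sLt; lia.
  have fz : f z = nth 0 Lt (index z L) by rewrite /f (negbTE zu) (negbTE zw).
  by split => //; rewrite fz mem_nth.
have hLt : forall t, t \in Lt -> t < #|` V| /\ t != x.
  by move=> t; rewrite mem_filter mem_iota /= => /andP[-> ->].
have fu : f u = y by rewrite /f eqxx.
have fw : f w = x by rewrite /f eq_sym (negbTE uw) eqxx.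
have cat : forall z, z \in V -> [\/ z = u, z = w | (z != u) && (z != w)].
  move=> z _; case: (z =P u) => [->|/eqP zu]; first by constructor 1.
  case: (z =P w) => [->|/eqP zw]; first by constructor 2.
  by constructor 3; apply/andP; split.
have yx : y != x by rewrite eq_sym.
exists f; split.
- move=> z1 z2 z1V z2V.
  case: (cat z1 z1V) => [->|->|/andP[z1u z1w]]; case: (cat z2 z2V) => [->|->|/andP[z2u z2w]] //.
  + move=> e; by move: e; rewrite fu fw => e; rewrite e eqxx in yx.
  + move=> e; case: (hO z2 z2V z2u z2w) => _ _ /hLt [lt _] _.
    by move: lt; rewrite -e fu; lia.
  + move=> e; by move: e; rewrite fu fw => e; rewrite e eqxx in yx.
  + move=> e; case: (hO z2 z2V z2u z2w) => _ _ /hLt [_ nx] _.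
    by move: nx; rewrite -e fw eqxx.
  + move=> e; case: (hO z1 z1V z1u z1w) => _ _ /hLt [lt _] _.
    by move: lt; rewrite e fu; lia.
  + move=> e; case: (hO z1 z1V z1u z1w) => _ _ /hLt [_ nx] _.
    by move: nx; rewrite e fw eqxx.
  + move=> e; case: (hO z1 z1V z1u z1w) => z1L i1 _ e1.
    case: (hO z2 z2V z2u z2w) => z2L i2 _ e2.
    move: e; rewrite e1 e2 => /eqP; rewrite nth_uniq // => /eqP ei.
    by rewrite -(nth_index 0 z1L) ei nth_index.
- by rewrite /f eqxx.
- by rewrite /f eq_sym (negbTE uw) eqxx.
- by move=> z zV zu zw; case: (hO z zV zu zw) => _ _ /hLt.
Qed.

Lemma gM_iso M G f X : graph_matroid_family M -> is_graph G ->
  {in verts G &, injective f} -> X `<=` G -> M (gimg f G) (gimg f X) = M G X.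
Proof. by case=> _ h _ hG inj XG; apply: h. Qed.

Lemma edge_split G a : is_graph G -> a \in G ->
  exists p q, [/\ p != q, p \in verts G, q \in verts G & a = [fset p; q]].
Proof.
move=> hG aG.
have : a != fset0 by apply/eqP => a0; have := hG a aG; rewrite a0 cardfs0.
case/fset0Pn => p pa; case: (edge2_other (hG a aG) pa) => q qp ae.
exists p, q; split => //; first by rewrite eq_sym.
- by apply/in_verts; exists a.
- by apply/in_verts; exists a; rewrite // ae fset22.
Qed.

Lemma gimg_sub f X Y : X `<=` Y -> gimg f X `<=` gimg f Y.
Proof.
move=> /fsubsetP XY; apply/fsubsetP => b /imfsetP [a aX ->].
by apply/imfsetP; exists a => //; apply: XY.
Qed.

Lemma pendant_bounded M C u : graph_matroid_family M -> is_circuit M C ->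
  u \in verts C -> deg C u = 1 -> exists B, forall n, grank M (Kn n) <= B.
Proof.
move=> hM [hCg hCr hCf] uC du.
have : #|` star C u| == 1 by rewrite -deg_star du.
case/cardfs1P => e se.
have : e \in star C u by rewrite se fset11.
rewrite in_star => /andP[eC ue].
case: (edge2_other (hCg e eC) ue) => w wu ee.
have wC : w \in verts C by apply/in_verts; exists e; rewrite // ee fset22.
have uw : u != w by rewrite eq_sym.
pose C0 := C `\ e.
have C0C : C0 `<=` C := fsubD1set C e.
have nu : forall a, a \in C0 -> u \notin a.
  move=> a; rewrite in_fsetD1 => /andP[ae aC]; apply/negP => ua.
  have : a \in star C u by rewrite in_star aC ua.
  by rewrite se => /fset1P ae'; rewrite ae' eqxx in ae.
have rk : M C C <= M C C0.
  have h1 := hCf e eC; rewrite /grank -/C0 (gM_res hM hCg C0C (fsubset_refl _)) in h1.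
  move: hCr; rewrite /grank h1; move: (M C C) (#|` C|) => a b; clear; lia.
have tr : forall n (f : nat -> nat), {in verts C &, injective f} ->
    (forall z, z \in verts C -> f z < n) ->
    [/\ gimg f C `<=` Kn n, gimg f C0 `<=` Kn n &
        M (Kn n) ((f @` e) |` gimg f C0) <= M (Kn n) (gimg f C0)].
  move=> n f inj fn.
  have sub : gimg f C `<=` Kn n.
    apply/fsubsetP => b /imfsetP [a aC ->].
    case: (edge_split hCg aC) => p [q [pq pC qC ->]].
    rewrite imfset_fset2; apply: Kn_edge; rewrite ?fn //.
    by apply/eqP => /(inj _ _ pC qC) pq'; rewrite pq' eqxx in pq.
  have sub0 : gimg f C0 `<=` gimg f C := gimg_sub f C0C.
  split => //; first exact: fsubset_trans sub.
  have -> : (f @` e) |` gimg f C0 = gimg f C by rewrite /gimg -imfsetU1 fsetD1K.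
  rewrite -(gM_res hM (@Kn_graph n) sub (fsubset_refl _)).
  rewrite -(gM_res hM (@Kn_graph n) sub sub0).
  by rewrite !gM_iso.
set s := #|` verts C|.
have fimg : forall (f : nat -> nat) p q, f @` [fset p; q] = [fset f p; f q].
  by move=> f p q; rewrite imfset_fset2.
have stA : forall n x y, x < s -> s <= y -> y < n ->
    M (Kn n) ([fset y; x] |` Kn s) = M (Kn n) (Kn s).
  move=> n x y xs sy yn.
  have xy : x != y by apply/eqP => e'; move: xs sy; rewrite e'; lia.
  case: (emb uC wC uw xy sy) => f [inj fu fw fo].
  have fn : forall z, z \in verts C -> f z < n.
    move=> z zC; case: (z =P u) => [->|/eqP zu]; first by rewrite fu.
    case: (z =P w) => [->|/eqP zw]; first by rewrite fw; lia.
    by case: (fo z zC zu zw) => lt _; lia.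
  case: (tr n f inj fn) => sub sub0 hle.
  have hr := gM_mat hM (@Kn_graph n).
  have sn : s <= n by lia.
  have fe : f @` e = [fset y; x] by rewrite ee fimg fu fw.
  have sub0s : gimg f C0 `<=` Kn s.
    apply/fsubsetP => b /imfsetP [a aC0 ->].
    have aC : a \in C by move/fsubsetP: C0C; apply.
    case: (edge_split hCg aC) => p [q [pq pC qC ae]].
    have pu : p != u by apply/eqP => pu; move: (nu a aC0); rewrite ae pu fset21.
    have qu : q != u by apply/eqP => qu; move: (nu a aC0); rewrite ae qu fset22.
    have fs : forall z, z \in verts C -> z != u -> f z < s.
      move=> z zC zu; case: (z =P w) => [->|/eqP zw]; first by rewrite fw.
      by case: (fo z zC zu zw).
    rewrite ae fimg; apply: Kn_edge; rewrite ?fs //.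
    by apply/eqP => /(inj _ _ pC qC) pq'; rewrite pq' eqxx in pq.
  apply: (incl_mono (A := gimg f C0) hr sub0s (Kn_mono sn)).
    by rewrite -fe; apply/(fsubsetP sub)/imfsetP; exists e.
  apply/eqP; rewrite eqn_leq -fe hle /=.
  apply: r_mono hr (fsubsetU1 _ _) _.
  by rewrite fsubUset sub0 fsub1set andbT; apply/(fsubsetP sub)/imfsetP; exists e.
have triv : forall n g, s <= n -> g \in Kn s ->
    M (Kn n) (g |` Kn s) = M (Kn n) (Kn s).
  by move=> n g sn gs; rewrite mem_fset1U.
have stB : forall n x y, s <= x -> s <= y -> x != y -> x < n -> y < n ->
    M (Kn n) ([fset y; x] |` Kn s) = M (Kn n) (Kn s).
  move=> n x y sx sy xy xn yn.
  case: (emb uC wC uw xy sy) => f [inj fu fw fo].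
  have fn : forall z, z \in verts C -> f z < n.
    move=> z zC; case: (z =P u) => [->|/eqP zu]; first by rewrite fu.
    case: (z =P w) => [->|/eqP zw]; first by rewrite fw.
    by case: (fo z zC zu zw) => lt _; lia.
  case: (tr n f inj fn) => sub sub0 hle.
  have hr := gM_mat hM (@Kn_graph n).
  have sn : s <= n by lia.
  have Ksn := Kn_mono sn.
  have fe : f @` e = [fset y; x] by rewrite ee fimg fu fw.
  have ge : [fset y; x] \in Kn n by rewrite -fe; apply/(fsubsetP sub)/imfsetP; exists e.
  have hA : forall b, b \in gimg f C0 -> M (Kn n) (b |` Kn s) = M (Kn n) (Kn s).
    move=> b /imfsetP [a aC0 ->].
    have aC : a \in C by move/fsubsetP: C0C; apply.
    case: (edge_split hCg aC) => p [q [pq pC qC ae]].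
    have pu : p != u by apply/eqP => pu; move: (nu a aC0); rewrite ae pu fset21.
    have qu : q != u by apply/eqP => qu; move: (nu a aC0); rewrite ae qu fset22.
    rewrite ae fimg.
    case: (p =P w) => [pw|/eqP pw].
      have qw : q != w by rewrite -pw eq_sym.
      case: (fo q qC qu qw) => lt _; rewrite pw fw; apply: stA => //.
    case: (q =P w) => [qw|/eqP qw].
      case: (fo p pC pu pw) => lt _; rewrite qw fw fset2C; apply: stA => //.
    case: (fo p pC pu pw) => lt1 _; case: (fo q qC qu qw) => lt2 _.
    apply: triv => //; apply: Kn_edge => //.
    by apply/eqP => /(inj _ _ pC qC) pq'; rewrite pq' eqxx in pq.
  have U : M (Kn n) (Kn s `|` gimg f C0) = M (Kn n) (Kn s) by apply: incl_union hr Ksn sub0 hA.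
  have KUn : Kn s `|` gimg f C0 `<=` Kn n by rewrite fsubUset Ksn sub0.
  have hA' : M (Kn n) ([fset y; x] |` gimg f C0) = M (Kn n) (gimg f C0).
    apply/eqP; rewrite eqn_leq -fe hle /=.
    apply: r_mono hr (fsubsetU1 _ _) _.
    by rewrite fsubUset sub0 fsub1set andbT fe.
  have := incl_mono hr (fsubsetUr (Kn s) (gimg f C0)) KUn ge hA'.
  rewrite U => h2.
  apply/eqP; rewrite eqn_leq; apply/andP; split; last first.
    by apply: r_mono hr (fsubsetU1 _ _) _; rewrite fsubUset Ksn fsub1set ge.
  rewrite -h2; apply: r_mono hr _ _; last by rewrite fsubUset fsub1set ge.
  by apply: fsetUS; rewrite fsubsetUl.
exists #|` Kn s| => n.
case: (leqP s n) => sn; last first.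
  have hr := gM_mat hM (@Kn_graph n).
  apply: leq_trans (r_card hr (fsubset_refl _)) _.
  by apply: fsubset_leq_card; apply: Kn_mono; lia.
have hr := gM_mat hM (@Kn_graph n).
have Ksn := Kn_mono sn.
have hall : forall g, g \in Kn n -> M (Kn n) (g |` Kn s) = M (Kn n) (Kn s).
  move=> g /in_Kn [a [b [ab bn ->]]].
  case: (ltnP b s) => bs.
    by apply: triv => //; apply/in_Kn; exists a, b.
  case: (ltnP a s) => as_.
    by rewrite fset2C; apply: stA.
  rewrite fset2C; apply: stB => //; first by rewrite neq_ltn ab.
  exact: ltn_trans ab bn.
have := incl_union hr Ksn (fsubset_refl _) hall.
rewrite (fsetUidPr _ _ Ksn) /grank => ->.
exact: r_card hr Ksn.
Qed.

Lemma d_pos M d : graph_matroid_family M -> unbounded M -> dimensionality M d -> 0 < d.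
Proof.
move=> hM hunb [[C [hC [_ [v vC dv]]]] _].
rewrite lt0n; apply/negP => /eqP d0; rewrite d0 in dv.
case: (pendant_bounded hM hC vC dv) => B hB.
by case: (hunb B) => n; rewrite ltnNge hB.
Qed.

Theorem lemma3p4 (M : graph -> graph -> nat) (d k : nat) (G : graph) :
  graph_matroid_family M -> nontrivial M -> unbounded M ->
  dimensionality M d -> 2 <= k -> is_graph G ->
  vert_connected G (M G) k ->
  mindeg_ge G (k + d - 1) /\ k + d <= #|` verts G|.
Proof.
move=> hM _ hunb hd k2 hG [kr hvc].
have d1 := d_pos hM hunb hd.
have hr := gM_mat hM hG.
have GG : G `<=` G := fsubset_refl G.
have Gne : verts G != fset0.
  apply/fset0Pn; case: (fset_0Vmem G) => [G0|[e eG]].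
    by exfalso; have := r_card hr GG; move: kr; rewrite G0 cardfs0; lia.
  have : e != fset0 by apply/eqP => e0; have := hG e eG; rewrite e0 cardfs0.
  by case/fset0Pn => x xe; exists x; apply/in_verts; exists e.
case: (min_exists (deg G) Gne) => v vG hv.
suff key : k + d - 1 <= deg G v.
  split; first by move=> w /hv; apply: leq_trans.
  have := deg_lt_verts hG vG; lia.
rewrite leqNgt; apply/negP => Dlt.
set D := deg G v in Dlt hv.
pose E1 := star G v.
pose E2 := G `\` E1.
have E1G : E1 `<=` G := star_sub G v.
have E2G : E2 `<=` G := fsubsetDl G E1.
have E12 : E1 `|` E2 = G.
  apply/fsetP => z; rewrite in_fsetU in_fsetD; case E: (z \in E1) => //=; symmetry; exact: (fsubsetP E1G z E).
have E12' : E1 `&` E2 = fset0 by apply/fsetP => z; rewrite in_fsetI in_fsetD in_fset0; case: (z \in E1).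
have ha : M G E1 <= D := r_card hr E1G.
have hb : M G E2 + minn D d <= M G G := star_rank hM hd hG GG (erefl _).
have hc : M G G <= M G E1 + M G E2.
  by have := r_sub hr E1G E2G; rewrite E12 E12' (r0 hr); lia.
have D1 : 0 < D.
  case/in_verts: vG => e eG ve; rewrite /D deg_star cardfs_gt0; apply/fset0Pn.
  by exists e; rewrite in_star eG ve.
have hlt : M G E1 < M G G.
  rewrite ltnNge; apply/negP => ca.
  case: (fset_0Vmem E2) => [E20|[g gE2]].
    have EG : E1 = G by rewrite -E12 E20 fsetU0.
    have : E1 != fset0 by rewrite -cardfs_gt0.
    case/fset0Pn => e; rewrite in_star => /andP[eG ve].
    case: (edge2_other (hG e eG) ve) => u uv ee.
    have ue : u \in e by rewrite ee fset22.
    have uG : u \in verts G by apply/in_verts; exists e.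
    have e' : e = [fset u; v] by apply: edge2_eq => //; exact: hG.
    have du : deg G u <= 1.
      rewrite deg_star -(cardfs1 e); apply: fsubset_leq_card; apply/fsubsetP => f.
      rewrite in_star => /andP[fG uf]; rewrite inE; apply/eqP.
      move: fG; rewrite -EG in_star => /andP[fG vf].
      by rewrite e'; apply: edge2_eq => //; exact: hG.
    have cG : M G G <= D by rewrite /D deg_star -/E1 EG; exact: r_card hr GG.
    have := hv u uG; move: kr du k2 cG; rewrite /D.
    move: (M G G) (deg G v) (deg G u) => c0 D0 du0; clear; lia.
  move: gE2; rewrite in_fsetD in_star => /andP[]; rewrite negb_and => vg gG.
  rewrite gG /= in vg.
  have : g != fset0 by apply/eqP => g0; have := hG g gG; rewrite g0 cardfs0.
  case/fset0Pn => u ug.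
  have uv : u != v by apply/eqP => uv; move: vg; rewrite -uv ug.
  pose X := g |` E1.
  have XG : X `<=` G by rewrite fsubUset fsub1set gG E1G.
  have gX : g \in X := fset1U1 g E1.
  have gE1 : g \notin E1 by rewrite in_star negb_and vg orbT.
  have Xg : X `\ g = E1 by rewrite fsetU1K.
  have le : M G X <= M G (X `\ g).
    by rewrite Xg; apply: leq_trans ca; apply: r_mono hr XG GG.
  case: (circuit_in hM hG XG gX le) => C [CX gC hC].
  have uC : u \in verts C by apply/in_verts; exists g.
  have := circ_deg hd hC uC.
  have : deg C u <= 2.
    rewrite deg_star; apply: (leq_trans (n := #|` [fset g; [fset u; v]]|)).
      apply: fsubset_leq_card; apply/fsubsetP => f; rewrite in_star => /andP[fC uf].
      move/fsubsetP: CX => /(_ f fC) /fset1UP [->|]; first by rewrite fset21.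
      rewrite in_star => /andP[fG vf]; rewrite (edge2_eq (hG f fG) uf vf uv).
      exact: fset22.
    by rewrite cardfs2; case: (_ != _).
  move: kr ca ha Dlt k2; rewrite /D.
  move: (M G G) (M G E1) (deg G v) (deg C u) => c0 a0 D0 du0; clear; lia.
apply: (hvc (M G E1 + M G E2 + 1 - M G G) E1 E2).
  move: ha hb hc hlt Dlt d1 k2 D1; rewrite /D !minnE.
  move: (M G G) (M G E1) (M G E2) (deg G v) => c0 a0 b0 D0; clear; lia.
split => //; move: ha hb hc hlt Dlt d1 k2 D1; rewrite /D !minnE;
  move: (M G G) (M G E1) (M G E2) (deg G v) => c0 a0 b0 D0; clear; lia.
Qed.
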